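(* Let $q\ge 2$, $n\ge 1$, $h\in F(n,q)$ and $G=\mathrm{IG}^*(h)$. Let $s\ge 1$, $c:[n]\to[s]$ and $u\in\Pi([n])$ be such that for every $i\in[n]$ at least one of the following holds: (1) for every neighbour $k$ of $i$ in $G$, $u(i)\le u(k)$; (2) for all $j,k\in[n]$ such that $c(j)=c(i)$, $u(i)<u(j)$ and $k$ is a neighbour of $j$ in $G$, we have $u(i)\le u(k)$. Then $\kappa(h,u)\le s$.
   Context: Let $q\ge 2$, $A=\{0,1,\dots,q-1\}$, $[n]=\{1,\dots,n\}$, and let $F(n,q)$ be the set of all maps $A^n\to A^n$. For $f\in F(m,q)$ and $i\in[m]$, $f_i$ is the $i$-th coordinate function and $f^i(x)=(x_1,\dots,x_{i-1},f_i(x),x_{i+1},\dots,x_m)$; for a word $w=(w_1,\dots,w_t)$ over $[m]$, $f^w=f^{w_t}\circ\cdots\circ f^{w_1}$. $\Pi([m])$ is the set of permutations of $[m]$ written as words $(w_1,\dots,w_m)$; $w(i)$ is the position of $i$ in $w$. $\mathrm{pr}_{[n]}:A^m\to A^n$ is the projection onto the first $n$ coordinates. For $m\ge n$, $(f,w)$ with $f\in F(m,q)$, $w\in\Pi([m])$ sequentializes $h\in F(n,q)$ if $\mathrm{pr}_{[n]}\circ f^w=h\circ\mathrm{pr}_{[n]}$. For $u\in\Pi([n])$, $w\in\Pi([m])$ respects $u$ if for all $i,j\in[n]$, $u(i)<u(j)$ implies $w(i)<w(j)$. $\kappa(h,u)$ is the smallest $k\ge0$ such that some $f\in F(n+k,q)$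 and $w\in\Pi([n+k])$ respecting $u$ sequentialize $h$. The interaction graph $\mathrm{IG}(h)$ is the directed graph on $[n]$ with an arc $(i,j)$ iff there exist $x,y\in A^n$ with $x_\ell=y_\ell$ for all $\ell\ne i$ and $h_j(x)\ne h_j(y)$; $\mathrm{IG}^*(h)$ is its undirected version ($\{i,j\}$ is an edge, possibly a loop, iff $(i,j)$ or $(j,i)$ is an arc). *)

(* Defs.v *)
(* Indices [n] = {1..n} are rendered 0-based as 'I_n,
   the alphabet A = {0..q-1} as 'I_q. *)
From mathcomp Require Import all_boot.
Set Implicit Arguments. Unset Strict Implicit. Unset Printing Implicit Defensive.

Definition config (n q : nat) := {ffun 'I_n -> 'I_q}.

Definition Fmap (n q : nat) := config n q -> config n q.

Definition upd (m q : nat) (f : Fmap m q) (i : 'I_m) (x : config m q) : config m q :=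
  [ffun j => if j == i then f x i else x j].

Definition seq_upd (m q : nat) (f : Fmap m q) (w : seq 'I_m) (x : config m q) : config m q :=
  foldl (fun y i => upd f i y) x w.

Definition is_perm_word (m : nat) (w : seq 'I_m) : bool := perm_eq w (enum 'I_m).

Definition wpos (m : nat) (w : seq 'I_m) (i : 'I_m) : nat := index i w.

Definition proj (n k q : nat) (x : config (n + k) q) : config n q :=
  [ffun i : 'I_n => x (lshift k i)].

Definition sequentializes (n k q : nat) (f : Fmap (n + k) q) (w : seq 'I_(n + k))
  (h : Fmap n q) : Prop :=
  forall x : config (n + k) q, proj (seq_upd f w x) = h (proj x).

Definition respects (n k : nat) (w : seq 'I_(n + k)) (u : seq 'I_n) : Prop :=
  forall i j : 'I_n, wpos u i < wpos u j -> wpos w (lshift k i) < wpos w (lshift k j).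

Definition seq_with (n q : nat) (h : Fmap n q) (u : seq 'I_n) (k : nat) : Prop :=
  exists (f : Fmap (n + k) q) (w : seq 'I_(n + k)),
    is_perm_word w /\ @respects n k w u /\ sequentializes f w h.

(* kappa(h,u) <= s, with kappa the least k such that seq_with h u k *)
Definition kappa_le (n q : nat) (h : Fmap n q) (u : seq 'I_n) (s : nat) : Prop :=
  exists k, k <= s /\ seq_with h u k.

Definition IG_arc (n q : nat) (h : Fmap n q) (i j : 'I_n) : Prop :=
  exists x y : config n q, (forall l, l != i -> x l = y l) /\ h x j <> h y j.

Definition IGs_edge (n q : nat) (h : Fmap n q) (i j : 'I_n) : Prop :=
  IG_arc h i j \/ IG_arc h j i.

(* Main.v *)
Require Import Defs.
From mathcomp Require Import all_boot.
From Stdlib Require Import ClassicalEpsilon.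

Lemma modsub q a S : 0 < q -> a < q -> (((a + S) %% q) + (q - S %% q)) %% q = a.
Proof.
move=> hq ha.
rewrite modnDml -addnA {1}(divn_eq S q) -addnA subnKC; last exact: ltnW (ltn_pmod _ hq).
by rewrite -mulSnr addnC modnMDl modn_small.
Qed.
Lemma splitL m n (i : 'I_m) : split (lshift n i) = inl i.
Proof. exact: (unsplitK (inl i)). Qed.
Lemma splitR m n (i : 'I_n) : split (rshift m i) = inr i.
Proof. exact: (unsplitK (inr i)). Qed.

Lemma agree n q (h : Fmap n q) (x y : config n q) (j : 'I_n) :
  (forall l, IG_arc h l j -> x l = y l) -> h x j = h y j.
Proof.
move=> H.
pose z m : config n q := [ffun l : 'I_n => if val l < m then y l else x l].
have zn : z n = y by apply/ffunP=> l; rewrite ffunE ltn_ord.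
have z0 : z 0 = x by apply/ffunP=> l; rewrite ffunE.
suff: forall m, h (z m) j = h x j by move=> /(_ n); rewrite zn.
elim=> [|m IH]; first by rewrite z0.
rewrite -IH.
case: (ltnP m n) => Hm; last first.
  congr (h _ j); apply/ffunP=> l; rewrite !ffunE.
  have lt : val l < m by exact: (leq_trans (ltn_ord l) Hm).
  by rewrite ltnS (ltnW lt) lt.
pose l0 : 'I_n := Ordinal Hm.
have Hoff : forall l', l' != l0 -> z m.+1 l' = z m l'.
  move=> l' Hl'; rewrite !ffunE ltnS leq_eqVlt.
  have -> : (val l' == m) = false.
    apply/negbTE; apply: contra Hl' => /eqP E; apply/eqP; exact: val_inj.
  by [].
case: (eqVneq (h (z m.+1) j) (h (z m) j)) => // Hne.
have Hxy : x l0 = y l0.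
  apply: H; exists (z m.+1), (z m); split; [exact: Hoff | exact/eqP].
have : z m.+1 = z m.
  apply/ffunP=> l'; case: (eqVneq l' l0) => [->|/Hoff //].
  by rewrite !ffunE /= ltnSn ltnn Hxy.
by move=> E; rewrite E eqxx in Hne.
Qed.

Definition toI {q : nat} (hq : 0 < q) (v : nat) : 'I_q := Ordinal (ltn_pmod v hq).

Definition inF {n s} (c : 'I_n -> 'I_s) (b : 'I_n -> bool) (a : 'I_s) (k : 'I_n) : bool :=
  (c k == a) && ~~ b k.

Definition fcons {q n s} (hq : 0 < q) (h : Fmap n q) (c : 'I_n -> 'I_s) (u : seq 'I_n)
  (b : 'I_n -> bool) : Fmap (n + s) q :=
  fun y => [ffun p : 'I_(n+s) =>
    match split p with
    | inl i => if b i then h (proj y) i else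
        toI hq (y (rshift n (c i)) + (q - (\sum_(k | inF c b (c i) k && (k != i))
           (if index k u < index i u then nat_of_ord (y (lshift s k))
            else nat_of_ord (h (proj y) k))) %% q))
    | inr a => toI hq (\sum_(k | inF c b a k) nat_of_ord (h (proj y) k))
    end].

Lemma aux_phase q n s (hq : 0 < q) (h : Fmap n q) (c : 'I_n -> 'I_s) (u : seq 'I_n) (b : 'I_n -> bool) (x : config (n+s) q) (l : seq 'I_s) :
 seq_upd (fcons hq h c u b) (map (@rshift n s) l) x =
 [ffun p => match split p with inl i => x p | inr a => if a \in l then
    toI hq (\sum_(k | inF c b a k) nat_of_ord (h (proj x) k)) else x p end].
Proof.
elim/last_ind: l => [|l a IH].
  by apply/ffunP=> p; rewrite ffunE; case: split.
rewrite map_rcons /seq_upd foldl_rcons -/(seq_upd _ _ _) IH.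
set Z := [ffun p => _].
have PZ : proj Z = proj x.
  by apply/ffunP=> i; rewrite !ffunE splitL.
apply/ffunP=> p; rewrite /upd !ffunE.
rewrite -[p](splitK p); case: (split p) => [i|a'] /=.
  by rewrite eq_lrshift splitL.
rewrite !splitR -cats1 mem_cat inE.
case: (eqVneq a' a) => [->|Hne].
  rewrite eqxx orbT PZ. by [].
have -> : (rshift n a' == rshift n a) = false.
  by apply/negbTE; apply: contra Hne => /eqP/rshift_inj ->.
by rewrite orbF.
Qed.

Definition Ystate {q n s} (u : seq 'I_n) (x0 : config n q) (Aa : 'I_s -> 'I_q)
  (h : Fmap n q) (t : nat) : config (n + s) q :=
  [ffun p => match split p with
     | inl i => if index i u < t then h x0 i else x0 i
     | inr a => Aa a end].

Lemma u_phase q n s (f : Fmap (n + s) q) (u : seq 'I_n) (x0 : config n q)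
  (Aa : 'I_s -> 'I_q) (h : Fmap n q) (i0 : 'I_n) :
  uniq u ->
  (forall t, t < size u -> f (Ystate u x0 Aa h t) (lshift s (nth i0 u t)) = h x0 (nth i0 u t)) ->
  forall t, t <= size u ->
  seq_upd f (map (lshift s) (take t u)) (Ystate u x0 Aa h 0) = Ystate u x0 Aa h t.
Proof.
move=> Uu Hf; elim=> [|t IH] Ht; first by rewrite take0.
rewrite (take_nth i0 Ht) map_rcons /seq_upd foldl_rcons -/(seq_upd _ _ _) IH ?(ltnW Ht) //.
set i := nth i0 u t.
have iu : index i u = t by rewrite /i index_uniq.
apply/ffunP=> p; rewrite /upd !ffunE.
rewrite -[p](splitK p); case: (split p) => [j|a] /=.
  rewrite (inj_eq (@lshift_inj _ _)) splitL.
  case: (eqVneq j i) => [->|Hne].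
    by rewrite Hf // iu ltnSn.
  have -> : (index j u < t.+1) = (index j u < t); last by [].
  rewrite ltnS leq_eqVlt.
  have -> : (index j u == t) = false; last by [].
  apply/negbTE; apply: contra Hne => /eqP E.
  have ju : j \in u by rewrite -index_mem E.
  by apply/eqP; rewrite /i -E nth_index.
by rewrite eq_sym eq_lrshift splitR.
Qed.

Theorem mainTheorem14 (q n : nat) (hq : 2 <= q) (hn : 1 <= n) (h : Fmap n q)
  (s : nat) (hs : 1 <= s) (c : 'I_n -> 'I_s) (u : seq 'I_n) (hu : is_perm_word u) :
  (forall i : 'I_n,
     (forall k : 'I_n, IGs_edge h i k -> wpos u i <= wpos u k) \/
     (forall j k : 'I_n, c j = c i -> wpos u i < wpos u j -> IGs_edge h j k ->
        wpos u i <= wpos u k)) ->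
  kappa_le h u s.
Proof.
move=> H.
have hq0 : 0 < q by exact: ltnW hq.
pose P1 i := forall k : 'I_n, IGs_edge h i k -> wpos u i <= wpos u k.
pose b i := if excluded_middle_informative (P1 i) then true else false.
have bP : forall i, b i -> P1 i.
  by move=> i; rewrite /b; case: excluded_middle_informative.
have nbP : forall i, ~~ b i -> (forall j k : 'I_n, c j = c i -> wpos u i < wpos u j ->
     IGs_edge h j k -> wpos u i <= wpos u k).
  move=> i; rewrite /b; case: excluded_middle_informative => // NP _.
  by case: (H i).
have Uu : uniq u by rewrite (perm_uniq hu) enum_uniq.
have memu : forall i, i \in u by move=> i; rewrite (perm_mem hu) mem_enum.
have nlr : forall (i : 'I_n) (l : seq 'I_s), (lshift s i \in map (@rshift n s) l) = false.
  move=> i l; apply/negP => /mapP [a _ E]; move: (eq_lrshift i a); by rewrite E eqxx.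
pose i0 : 'I_n := Ordinal hn.
exists s; split => //.
exists (fcons hq0 h c u b), (map (@rshift n s) (enum 'I_s) ++ map (lshift s) u).
split; [|split].
- rewrite /is_perm_word; apply: uniq_perm.
  + rewrite cat_uniq !map_inj_uniq ?enum_uniq //; try exact: lshift_inj; try exact: rshift_inj.
    apply/and3P; split; [by rewrite -enumT enum_uniq | | exact: Uu].
    apply/hasPn => p /mapP [i _ ->]; by rewrite nlr.
  + exact: enum_uniq.
  + move=> p; rewrite mem_enum mem_cat -[p](splitK p); case: (split p) => [i|a] /=;
    apply/orP; [right | left]; apply: map_f; by rewrite ?memu ?mem_enum.
- move=> i j; rewrite /wpos !index_cat !nlr !index_map; try exact: lshift_inj.
  by rewrite size_map size_enum_ord ltn_add2l.
- move=> x.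
  rewrite /seq_upd foldl_cat -/(seq_upd _ _ _) -/(seq_upd _ _ _) aux_phase.
  set x0 := proj x.
  set Aa := fun a => toI hq0 (\sum_(k | inF c b a k) nat_of_ord (h x0 k)).
  have -> : [ffun p => match split p with inl _ => x p | inr a => if a \in enum 'I_s then
    toI hq0 (\sum_(k | inF c b a k) nat_of_ord (h (proj x) k)) else x p end]
     = Ystate u x0 Aa h 0.
    apply/ffunP=> p; rewrite /Ystate !ffunE -[p](splitK p); case: (split p) => [i|a] /=.
      by rewrite splitL /x0 ffunE.
    by rewrite splitR mem_enum.
  have Hstep : forall t, t < size u ->
      fcons hq0 h c u b (Ystate u x0 Aa h t) (lshift s (nth i0 u t)) = h x0 (nth i0 u t).
    move=> t Ht; set i := nth i0 u t.
    have iu : index i u = t by rewrite /i index_uniq.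
    rewrite /fcons ffunE splitL.
    case Hb: (b i).
      apply: agree => l Hl; rewrite {1}/proj ffunE /Ystate ffunE splitL.
      have le : index i u <= index l u by exact: (bP i Hb l (or_intror Hl)).
      by rewrite -iu ltnNge le.
    have P2 := nbP i (negbT Hb).
    rewrite /Ystate ffunE splitR.
    set S := \sum_(k | _) _.
    have -> : S = \sum_(k | inF c b (c i) k && (k != i)) nat_of_ord (h x0 k).
      apply: eq_bigr => k /andP [Hk Hki].
      have Hck : c k = c i by move: Hk; rewrite /inF => /andP [/eqP].
      rewrite ffunE splitL -iu.
      case: ltnP => Hlt; first by [].
      have Hne : index i u != index k u.
        apply: contra Hki => /eqP E; apply/eqP.
        by rewrite -(nth_index i0 (memu k)) -E nth_index.
      have lt : index i u < index k u by rewrite ltn_neqAle Hne Hlt.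
      congr (nat_of_ord _); apply: agree => l Hl; rewrite {1}/proj ffunE ffunE splitL.
      have le : index i u <= index l u by exact: (P2 k l Hck lt (or_intror Hl)).
      by rewrite ltnNge le.
    apply: val_inj => /=.
    rewrite (bigD1 i) /=; last by rewrite /inF eqxx Hb.
    by rewrite modsub.
  have UP := @u_phase _ _ _ (fcons hq0 h c u b) u x0 Aa h i0 Uu Hstep (size u) (leqnn _).
  rewrite take_size in UP; rewrite UP.
  apply/ffunP=> i; rewrite /Ystate !ffunE splitL.
  by rewrite index_mem memu.
Qed.
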